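(* Let $G$ be the directed graph on nodes $v_1,\dots,v_n$ with edges $(v_i,v_{i+1})$ for $1\le i\le n-1$ and $(v_i,v_j)$ for all $1\le j<i\le n$. Let $q=1/\sqrt n$. There is an absolute constant $c>0$ such that the convergence time of the \textsc{Random Pick} process on $G$ started from a $q$-random state is at least $c/(q\ln n)^2=c\,n/(\ln n)^2$ with probability $1-o(1)$ as $n\to\infty$.
   Context: In a $q$-random state each node is independently colored (red or blue, arbitrarily) with probability $q$ and uncolored otherwise. \textsc{Random Pick} process: in each round every node with at least one out-neighbor picks an out-neighbor uniformly at random, independently; an uncolored node adopts the color of its pick if the pick is colored, and all other nodes keep their color. A state is stable if no uncolored node has a colored out-neighbor; the convergence time is the first round $t\ge0$ at which the state is stable. *)

(* Defs.v *)
From HB Require Import structures.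
From mathcomp Require Import all_boot all_order all_algebra.
From mathcomp Require Import mathcomp_extra boolp classical_sets reals exp.
Set Implicit Arguments. Unset Strict Implicit. Unset Printing Implicit Defensive.
Import Order.TTheory GRing.Theory Num.Theory.
Local Open Scope ring_scope.

(* Nodes v_1..v_n are represented by 'I_n, node i : 'I_n standing for v_{i+1}. *)
Definition edgeG (n : nat) : rel 'I_n :=
  fun i j => ((j : nat) == (i : nat).+1) || (j < i)%N.

(* A state: None = uncolored, Some b = colored (b = red/blue). *)
Definition cstate (n : nat) := 'I_n -> option bool.

Definition stable n (e : rel 'I_n) (s : cstate n) : bool :=
  [forall i, forall j, ((s i == None) && e i j) ==> (s j == None)].

Definition outdeg n (e : rel 'I_n) (i : 'I_n) : nat := #|[pred j | e i j]|.

(* One round of Random Pick, given the picks p (p i = out-neighbor picked by i;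
   irrelevant for nodes with no out-neighbor, for which p i = i is used). *)
Definition step n (s : cstate n) (p : {ffun 'I_n -> 'I_n}) : cstate n :=
  fun i => if s i is None then s (p i) else s i.

Definition pick_w (R : realType) n (e : rel 'I_n) (i j : 'I_n) : R :=
  if outdeg e i == 0%N then (j == i)%:R else (e i j)%:R / (outdeg e i)%:R.

Definition picks_w (R : realType) n m (e : rel 'I_n)
  (P : {ffun 'I_m -> {ffun 'I_n -> 'I_n}}) : R :=
  \prod_(t < m) \prod_(i < n) pick_w R e i (P t i).

(* q-random initial state: mask i = node i colored (independently, prob q);
   colored nodes get the (arbitrary) color col i. *)
Definition init n (col : 'I_n -> bool) (mask : {ffun 'I_n -> bool}) : cstate n :=
  fun i => if mask i then Some (col i) else None.

Definition init_w (R : realType) n (q : R) (mask : {ffun 'I_n -> bool}) : R :=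
  \prod_(i < n) (if mask i then q else 1 - q).

Definition state_at n m (s0 : cstate n)
  (P : {ffun 'I_m -> {ffun 'I_n -> 'I_n}}) (t : nat) : cstate n :=
  foldl (@step n) s0 (take t (codom P)).

Definition Pr (R : realType) n m (e : rel 'I_n) (q : R)
  (E : pred ({ffun 'I_n -> bool} * {ffun 'I_m -> {ffun 'I_n -> 'I_n}})) : R :=
  \sum_(w | E w) (init_w q w.1 * picks_w R e w.2).

(* Probability that the convergence time T (first t >= 0 with a stable state)
   satisfies T >= x, i.e. the states at all rounds t < x are unstable.  Only the
   rounds t <= truncn x matter, so m = (truncn x).+1 rounds of picks suffice. *)
Definition Pr_convtime_ge (R : realType) n (e : rel 'I_n) (col : 'I_n -> bool)
  (q x : R) : R :=
  let m := (Num.truncn x).+1 in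
  @Pr R n m e q (fun w => [forall t : 'I_m,
     ((t%:R : R) < x) ==> ~~ stable e (state_at (init col w.1) w.2 t)]).

(* Main.v *)
Require Import Defs.
From HB Require Import structures.
From mathcomp Require Import all_boot all_order all_algebra.
From mathcomp Require Import mathcomp_extra boolp classical_sets reals exp.
From mathcomp Require Import sequences.
From mathcomp Require Import zify ring lra.
Set Implicit Arguments. Unset Strict Implicit. Unset Printing Implicit Defensive.
Import Order.TTheory GRing.Theory Num.Theory.
Local Open Scope ring_scope.

Section Gen.
Variable R : realType.

Lemma sum_ffun_prod (I J : finType) (F : I -> J -> R) (P : I -> pred J) :
  \sum_(f : {ffun I -> J}) (\prod_i (P i (f i))%:R) * \prod_i F i (f i)
  = \prod_i \sum_(j | P i j) F i j.
Proof.
under eq_bigr => i _ do rewrite big_mkcond /=.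
rewrite bigA_distr_bigA; apply: eq_bigr => f _.
rewrite -big_split /=; apply: eq_bigr => i _.
by case: (P i (f i)); rewrite ?mul1r ?mul0r.
Qed.

Lemma sum_ffun_prod1 (I J : finType) (F : I -> J -> R) :
  \sum_(f : {ffun I -> J}) \prod_i F i (f i) = \prod_i \sum_j F i j.
Proof. by rewrite bigA_distr_bigA. Qed.

Lemma pick_w_sum n (e : rel 'I_n) i : \sum_j pick_w R e i j = 1.
Proof.
rewrite /pick_w; case: eqP => [_|/eqP d0].
  rewrite (bigD1 i) //= eqxx big1 ?addr0 // => j /negPf -> //.
rewrite -mulr_suml -natr_sum.
have -> : (\sum_(j < n) e i j : nat) = outdeg e i.
  rewrite /outdeg -sum1_card [RHS]big_mkcond /=; apply: eq_bigr => j _.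
  by rewrite inE; case: (e i j).
by rewrite divff // pnatr_eq0.
Qed.

Lemma pick_w_ge0 n (e : rel 'I_n) i j : 0 <= pick_w R e i j.
Proof. by rewrite /pick_w; case: ifP => _; rewrite ?ler0n // divr_ge0. Qed.

Lemma pick_w_edge n (e : rel 'I_n) i j : outdeg e i != 0%N ->
  pick_w R e i j != 0 -> e i j.
Proof. by rewrite /pick_w => /negPf ->; case: (e i j); rewrite ?mul0r ?eqxx. Qed.

Definition wp n (e : rel 'I_n) (p : {ffun 'I_n -> 'I_n}) : R :=
  \prod_i pick_w R e i (p i).

Lemma wp_ge0 n (e : rel 'I_n) p : 0 <= wp e p.
Proof. by apply: prodr_ge0 => i _; exact: pick_w_ge0. Qed.

Lemma wp_sum n (e : rel 'I_n) : \sum_p wp e p = 1.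
Proof.
rewrite /wp (sum_ffun_prod1 (fun i j => pick_w R e i j)) big1 // => i _; exact: pick_w_sum.
Qed.

Lemma picks_w_sum n m (e : rel 'I_n) : \sum_P picks_w R (m:=m) e P = 1.
Proof.
rewrite /picks_w (sum_ffun_prod1 (fun t p => wp e p)) big1 // => t _; exact: wp_sum.
Qed.

Lemma picks_w_ge0 n m (e : rel 'I_n) P : 0 <= picks_w R (m:=m) e P.
Proof. by apply: prodr_ge0 => t _; exact: wp_ge0. Qed.

End Gen.

Section Graph.
Variable n' : nat.
Local Notation n := n'.+1.
Local Notation W := {ffun 'I_n -> 'I_n}.

Definition nxt (z : nat) (p : W) : nat :=
  if (0 < z)%N && ((p (inord z.-1) : nat) == z) then z.-1 else z.

Definition validp (p : W) := [forall i, edgeG i (p i)].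

Lemma nxt_le z p : (nxt z p <= z)%N.
Proof. by rewrite /nxt; case: ifP => // _; exact: leq_pred. Qed.

Lemma fold_nxt_le ps z : (foldl nxt z ps <= z)%N.
Proof.
elim: ps z => //= p ps IH z; exact: leq_trans (IH _) (nxt_le _ _).
Qed.

Lemma inv_step (s : cstate n) z p : validp p ->
  (forall i : 'I_n, (i < z)%N -> s i = None) ->
  forall i : 'I_n, (i < nxt z p)%N -> step s p i = None.
Proof.
move=> /forallP V H i Hi.
have Hiz : (i < z)%N := leq_trans Hi (nxt_le z p).
rewrite /step H //.
have := V i; rewrite /edgeG => /orP [/eqP Ep | Ep].
  have [lt|ge] := ltnP (p i) z; first exact: H.
  have Ez : z = i.+1 by lia.
  move: Hi; rewrite /nxt Ez /= inord_val Ep eqxx /=; lia.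
by apply: H; lia.
Qed.

Lemma inv_fold ps : all validp ps -> forall (s : cstate n) z,
  (forall i : 'I_n, (i < z)%N -> s i = None) ->
  forall i : 'I_n, (i < foldl nxt z ps)%N -> foldl (@step n) s ps i = None.
Proof.
elim: ps => [|p ps IH] //= /andP[vp vps] s z H.
apply: IH => //; exact: inv_step.
Qed.

Lemma persist ps (s : cstate n) i : s i != None -> foldl (@step n) s ps i != None.
Proof.
elim: ps s => //= p ps IH s H; apply: IH.
by rewrite /step; case: (s i) H.
Qed.

Lemma stable_none (s : cstate n) : stable (@edgeG n) s -> s ord0 = None ->
  forall i, s i = None.
Proof.
move=> /forallP St H0.
suff: forall k (i : 'I_n), (i : nat) = k -> s i = None.
  by move=> h i; exact: h _ _ erefl.
elim=> [|k IH] i Hi.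
  by have -> : i = ord0 by apply: val_inj.
have Hk : (k < n)%N by have := ltn_ord i; lia.
have := St (inord k) => /forallP /(_ i) /implyP.
rewrite IH ?inordK // eqxx /edgeG Hi inordK // eqxx /= => /(_ isT) /eqP //.
Qed.

Definition fk k (j : 'I_k.+1) : 'I_n := if (j < k)%N then inord j else inord k.+1.

Lemma outdeg_ge k : (k.+1 < n)%N -> (k.+1 <= outdeg (@edgeG n) (inord k))%N.
Proof.
move=> Hk.
set f := @fk k.
have fv j : (f j : nat) = if (j < k)%N then (j : nat) else k.+1.
  rewrite /f /fk; case: ifP => h; rewrite inordK //; lia.
have finj : injective f.
  move=> j1 j2 /(congr1 (@nat_of_ord _)); rewrite !fv => E; apply: val_inj => /=.
  move: E (ltn_ord j1) (ltn_ord j2); do 2 case: ifP; lia.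
rewrite -{1}(card_ord k.+1) -cardsT -(card_imset _ finj) /outdeg.
apply: subset_leq_card; apply/fintype.subsetP => y /imsetP [j _ ->].
rewrite inE /edgeG fv inordK; last lia.
move: (ltn_ord j); case: ifP => h; lia.
Qed.

Lemma pick_w_le (R : realType) k : (k.+1 < n)%N ->
  pick_w R (@edgeG n) (inord k) (inord k.+1) <= (k.+1%:R)^-1.
Proof.
move=> Hk; have Hd := outdeg_ge Hk.
rewrite /pick_w ifF; last by apply/negbTE; lia.
rewrite /edgeG !inordK ?eqxx //=; last lia.
rewrite mul1r lef_pV2 ?ler_nat // posrE ltr0n //; exact: leq_trans _ Hd.
Qed.

End Graph.

Section Z.
Variable R : realType.
Variable n' : nat.
Local Notation n := n'.+1.
Local Notation W := {ffun 'I_n -> 'I_n}.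
Local Notation e := (@edgeG n).

Definition Bz (r z : nat) : R := ('C(r, z))%:R / (z`!)%:R.

Definition consf r (w : W * {ffun 'I_r -> W}) : {ffun 'I_r.+1 -> W} :=
  [ffun t => if unlift ord0 t is Some t' then w.2 t' else w.1].
Definition uncons r (P : {ffun 'I_r.+1 -> W}) : W * {ffun 'I_r -> W} :=
  (P ord0, [ffun t => P (lift ord0 t)]).

Lemma consfK r : cancel (@uncons r) (@consf r).
Proof.
by move=> P; apply/ffunP => t; rewrite ffunE; case: unliftP => [j ->|->]; rewrite /= ?ffunE.
Qed.

Lemma unconsK r : cancel (@consf r) (@uncons r).
Proof.
case=> p Q; rewrite /uncons /consf ffunE unlift_none; congr pair.
by apply/ffunP => t; rewrite !ffunE liftK.
Qed.

Lemma codom_consf r w : codom (@consf r w) = w.1 :: codom w.2.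
Proof.
rewrite !codomE enum_ordSl /= ffunE unlift_none -map_comp; congr cons.
by apply: eq_map => t; rewrite /= ffunE liftK.
Qed.

Lemma prod_consf r w : \prod_(t < r.+1) wp R e (@consf r w t) =
  wp R e w.1 * \prod_(t < r) wp R e (w.2 t).
Proof.
rewrite big_ord_recl ffunE unlift_none; congr (_ * _).
by apply: eq_bigr => t _; rewrite ffunE liftK.
Qed.

Lemma sum_pair (I J : finType) (F : I -> J -> R) :
  \sum_(w : I * J) F w.1 w.2 = \sum_i \sum_j F i j.
Proof. by rewrite pair_big. Qed.

Lemma Bz_ge0 r z : 0 <= Bz r z.
Proof. by rewrite /Bz divr_ge0 ?ler0n. Qed.

Lemma sum_pick_eq (i0 : 'I_n) (j0 : 'I_n) :
  \sum_(p : W) (p i0 == j0)%:R * wp R e p = pick_w R e i0 j0.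
Proof.
have -> : \sum_(p : W) (p i0 == j0)%:R * wp R e p =
   \sum_(p : W) (\prod_i ((i == i0) ==> (p i == j0))%:R) * \prod_i pick_w R e i (p i).
  apply: eq_bigr => p _; congr (_ * _).
  rewrite (bigD1 i0) //= eqxx /= big1 ?mulr1 // => i /negPf -> //.
rewrite (sum_ffun_prod (fun i j => pick_w R e i j) (fun i j => (i == i0) ==> (j == j0))).
rewrite (bigD1 i0) //= [X in _ * X]big1 ?mulr1.
  by rewrite (big_pred1 j0) // => j; rewrite eqxx.
move=> i /negPf ->; rewrite /=; exact: pick_w_sum.
Qed.

Lemma zbound r : forall z, (z <= n')%N ->
  \sum_(P : {ffun 'I_r -> W}) (foldl (@nxt n') z (codom P) == 0%N)%:R *
     \prod_(t < r) wp R e (P t) <= Bz r z.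
Proof.
elim: r => [|r IH] z Hz.
  under eq_bigr => P _ do have -> : codom P = [::]
    by apply/size0nil; rewrite size_codom card_ord.
  rewrite /= -mulr_sumr.
  have -> : \sum_(P : {ffun 'I_0 -> W}) \prod_(t < 0) wp R e (P t) = 1.
    exact: (picks_w_sum R 0 e).
  rewrite mulr1 /Bz; case: z Hz => [|z] _; first by rewrite bin0 /= divr1.
  by rewrite /= mul0r.
rewrite (reindex (@consf r)); last first.
  by exists (@uncons r) => w _; [exact: unconsK | exact: consfK].
under eq_bigr => w _ do rewrite codom_consf prod_consf /=.
rewrite (sum_pair (fun (p : W) (Q : {ffun 'I_r -> W}) => (foldl (@nxt n') ((@nxt n') z p) (codom Q) == 0%N)%:R *
   (wp R e p * \prod_(t < r) wp R e (Q t)))).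
under eq_bigr => p _ do under eq_bigr => Q _ do rewrite mulrCA.
under eq_bigr => p _ do rewrite -mulr_sumr.
apply: le_trans (_ : \sum_p wp R e p * Bz r (nxt z p) <= _).
  apply: ler_sum => p _; apply: ler_wpM2l; first exact: wp_ge0.
  apply: IH; exact: leq_trans (nxt_le _ _) Hz.
case: z Hz => [|k] Hk.
  have E0 p : nxt 0 p = 0%N by [].
  under eq_bigr => p _ do rewrite E0.
  by rewrite -mulr_suml wp_sum mul1r /Bz !bin0.
have Ek p : nxt k.+1 p = if (p (inord k) == inord k.+1 :> 'I_n) then k else k.+1.
  rewrite /nxt /= -val_eqE /= inordK //; lia.
apply: le_trans (_ : \sum_p (wp R e p * ((p (inord k) == inord k.+1)%:R * Bz r k)
     + wp R e p * Bz r k.+1) <= _).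
  apply: ler_sum => p _; rewrite Ek -mulrDr; apply: ler_wpM2l; first exact: wp_ge0.
  by case: eqP => _; rewrite ?mul1r ?mul0r ?add0r ?lerDl ?Bz_ge0.
rewrite big_split /= -mulr_suml wp_sum mul1r.
under eq_bigr => p _ do rewrite mulrA [_ * _%:R]mulrC.
rewrite -mulr_suml sum_pick_eq.
apply: le_trans (_ : (k.+1%:R)^-1 * Bz r k + Bz r k.+1 <= _).
  rewrite lerD2r ler_wpM2r ?Bz_ge0 //; apply: pick_w_le; lia.
rewrite /Bz binS factS natrD natrM le_eqVlt; apply/orP; left; apply/eqP.
have h1 : k`!%:R != 0 :> R by rewrite pnatr_eq0 -lt0n fact_gt0.
have h2 : 1 + k%:R != 0 :> R by rewrite addrC natr1 pnatr_eq0.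
by field; rewrite h1 h2.
Qed.

End Z.

Section Mask.
Variable R : realType.
Variable n : nat.
Variable q : R.
Hypothesis q01 : 0 <= q <= 1.

Local Notation G := (fun (i : 'I_n) (b : bool) => if b then q else 1 - q).

Lemma G_sum i : \sum_b G i b = 1.
Proof. by rewrite big_bool /= addrC subrK. Qed.

Lemma init_w_ge0 (mask : {ffun 'I_n -> bool}) : 0 <= init_w q mask.
Proof.
apply: prodr_ge0 => i _; case: (mask i); case/andP: q01 => // _; by rewrite subr_ge0.
Qed.

Lemma init_w_sum : \sum_(mask : {ffun 'I_n -> bool}) init_w q mask = 1.
Proof.
rewrite /init_w (sum_ffun_prod1 G) big1 // => i _; exact: G_sum.
Qed.

Lemma init_w_one i0 : \sum_(mask : {ffun 'I_n -> bool}) (mask i0)%:R * init_w q mask = q.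
Proof.
have -> : \sum_(mask : {ffun 'I_n -> bool}) (mask i0)%:R * init_w q mask =
   \sum_(mask : {ffun 'I_n -> bool}) (\prod_i ((i == i0) ==> mask i)%:R) * \prod_i G i (mask i).
  apply: eq_bigr => p _; congr (_ * _).
  rewrite (bigD1 i0) //= eqxx /= big1 ?mulr1 // => i /negPf -> //.
rewrite (sum_ffun_prod G (fun i b => (i == i0) ==> b)).
rewrite (bigD1 i0) //= [X in _ * X]big1 ?mulr1.
  by rewrite (big_pred1 true) // => b; rewrite eqxx; case: b.
move=> i /negPf ->; rewrite /=; exact: G_sum.
Qed.

Lemma init_w_none :
  \sum_(mask : {ffun 'I_n -> bool}) (\prod_i (~~ mask i)%:R) * init_w q mask = (1 - q) ^+ n.
Proof.
rewrite (sum_ffun_prod G (fun i b => ~~ b)).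
have H i : \sum_(b | ~~ b) G i b = 1 - q by rewrite (big_pred1 false) //; case.
rewrite (eq_bigr (fun=> 1 - q)) => [|i _]; last exact: H.
by rewrite prodr_const card_ord.
Qed.

Definition Aev (K : nat) (mask : {ffun 'I_n -> bool}) :=
  [exists i : 'I_n, (i < K)%N && mask i] || [forall i, ~~ mask i].

Lemma Aev_bound K : (K <= n)%N ->
  \sum_(mask : {ffun 'I_n -> bool}) (Aev K mask)%:R * init_w q mask <= K%:R * q + (1 - q) ^+ n.
Proof.
move=> Kn.
apply: le_trans (_ : \sum_(mask : {ffun 'I_n -> bool}) ((\sum_(i : 'I_n | (i < K)%N) (mask i)%:R)
   + \prod_i (~~ mask i)%:R) * init_w q mask <= _).
  apply: ler_sum => mask _; apply: ler_wpM2r; first exact: init_w_ge0.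
  have S1 : 0 <= \sum_(i : 'I_n | (i < K)%N) (mask i)%:R :> R by apply: sumr_ge0.
  have S2 : 0 <= \prod_i (~~ mask i)%:R :> R by apply: prodr_ge0.
  rewrite /Aev; case: existsP => [[i /andP [iK mi]]|_] /=.
    rewrite (bigD1 i) //= mi -addrA lerDl addr_ge0 //; exact: sumr_ge0.
  case: forallP => [H|_]; last by rewrite addr_ge0.
  apply: ler_wpDl S1 _; rewrite big1 // => i _; by rewrite (negPf (H i)).
under eq_bigr => mask _ do rewrite mulrDl mulr_suml.
rewrite big_split /= init_w_none lerD2r exchange_big /=.
under eq_bigr => i _ do rewrite init_w_one.
rewrite -(big_ord_widen _ (fun _ => q) Kn) sumr_const card_ord mulr_natl //.
Qed.

End Mask.

Section Main.
Variable R : realType.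
Variable n' : nat.
Local Notation n := n'.+1.
Local Notation W := {ffun 'I_n -> 'I_n}.
Local Notation e := (@edgeG n).

Lemma outdeg_pos (hn : (0 < n')%N) (i : 'I_n) : outdeg e i != 0%N.
Proof.
rewrite -lt0n; apply/card_gt0P.
case: (eqVneq (i : nat) 0%N) => [i0|i0].
  exists (inord 1); rewrite inE /edgeG inordK ?i0 //; lia.
exists ord0; rewrite inE /edgeG /=; lia.
Qed.

Lemma valid_of_picks m (P : {ffun 'I_m -> W}) : (0 < n')%N ->
  picks_w R e P != 0 -> forall t, validp (P t).
Proof.
move=> hn H t; apply/forallP => i.
apply: (pick_w_edge (R := R) (outdeg_pos hn i)).
apply: contraNneq H => h0; apply/prodf_eq0; exists t => //.
by apply/prodf_eq0; exists i => //; rewrite h0.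
Qed.

Lemma E_holds m x col (mask : {ffun 'I_n -> bool}) (P : {ffun 'I_m -> W}) K :
  (forall t, validp (P t)) -> ~~ Aev K mask ->
  ~~ (foldl (@nxt n') K (codom P) == 0%N) ->
  [forall t : 'I_m, ((t%:R : R) < x) ==> ~~ stable e (state_at (init col mask) P t)].
Proof.
move=> V; rewrite /Aev negb_or => /andP [/existsPn hA /forallPn [j0 hj0]] hC.
rewrite negbK in hj0.
set s0 := init col mask.
have Hs0 : forall i : 'I_n, (i < K)%N -> s0 i = None.
  move=> i iK; rewrite /s0 /init; have := hA i; rewrite iK /=.
  by case: (mask i).
apply/forallP => t; apply/implyP => _; apply/negP => St.
set ps := take t (codom P).
have Hv : all (@validp n') ps.
  by apply/allP => p /mem_take /codomP [t' ->]; exact: V.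
have Hz : (0 < foldl (@nxt n') K ps)%N.
  have := fold_nxt_le (drop t (codom P)) (foldl (@nxt n') K ps).
  rewrite -foldl_cat cat_take_drop; move: hC; lia.
have H0 := inv_fold Hv Hs0 (i := ord0) Hz.
have := stable_none St H0 j0; apply/eqP.
apply: persist; by rewrite /s0 /init hj0.
Qed.

Lemma gen_bound (q : R) m (E : pred ({ffun 'I_n -> bool} * {ffun 'I_m -> W})) K :
  (0 < n')%N -> (K <= n')%N -> 0 <= q <= 1 ->
  (forall mask (P : {ffun 'I_m -> W}), (forall t, validp (P t)) -> ~~ Aev K mask ->
     ~~ (foldl (@nxt n') K (codom P) == 0%N) -> E (mask, P)) ->
  1 - (K%:R * q + (1 - q) ^+ n + Bz R m K) <= Pr e q E.
Proof.
move=> hn hK q01 HE; rewrite /Pr.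
set F := fun w : {ffun 'I_n -> bool} * {ffun 'I_m -> W} => init_w q w.1 * picks_w R e w.2.
have tot : \sum_w F w = 1.
  rewrite (sum_pair (fun a b => init_w q a * picks_w R e b)).
  under eq_bigr do rewrite -mulr_sumr picks_w_sum mulr1.
  exact: init_w_sum.
suff Hn : \sum_(w | ~~ E w) F w <= K%:R * q + (1 - q) ^+ n + Bz R m K.
  move: tot; rewrite (bigID E) /= => tot; lra.
apply: le_trans (_ : \sum_(w : {ffun 'I_n -> bool} * {ffun 'I_m -> W}) ((Aev K w.1)%:R + (foldl (@nxt n') K (codom w.2) == 0%N)%:R) * F w <= _).
  have F0 w : 0 <= F w by rewrite /F mulr_ge0 ?init_w_ge0 ?picks_w_ge0.
  rewrite [X in X <= _]big_mkcond; apply: ler_sum => w _; case: ifP => hE; last first.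
    by rewrite mulr_ge0 ?addr_ge0.
  have [->|Fn0] := eqVneq (F w) 0; first by rewrite mulr0.
  have V : forall t, validp (w.2 t).
    apply: valid_of_picks => //; move: Fn0; rewrite /F mulf_eq0 negb_or.
    by case/andP.
  apply: ler_peMl => //.
  have hAC : Aev K w.1 || (foldl (@nxt n') K (codom w.2) == 0%N).
    apply/negPn/negP; rewrite negb_or => /andP [hA hC]; move: hE.
    by rewrite (surjective_pairing w) HE.
  move: hAC; case: (Aev K w.1); case: (foldl (@nxt n') K (codom w.2) == 0%N) => //= _; lra.
under eq_bigr do rewrite mulrDl.
rewrite big_split /=; apply: lerD.
  rewrite (sum_pair (fun a b => (Aev K a)%:R * (init_w q a * picks_w R e b))).
  under eq_bigr do rewrite -mulr_sumr -mulr_sumr picks_w_sum mulr1.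
  apply: (Aev_bound q01); lia.
rewrite (sum_pair (fun (a : {ffun 'I_n -> bool}) (b : {ffun 'I_m -> W}) => (foldl (@nxt n') K (codom b) == 0%N)%:R * (init_w q a * picks_w R e b))).
under eq_bigr do under eq_bigr do rewrite mulrCA.
under eq_bigr do rewrite -mulr_sumr.
rewrite -mulr_suml init_w_sum mul1r.
have := zbound R m hK; apply: le_trans; exact: lexx.
Qed.

End Main.

Section Real.
Variable R : realType.

Lemma ffact_le_exp m k : (m ^_ k <= m ^ k)%N.
Proof.
elim: k m => [|k IH] m //; rewrite ffactnS expnS leq_mul2l.
apply/orP; right; apply: leq_trans (IH _) _; case: (k) => [|k'] //.
rewrite leq_exp2r //; exact: leq_pred.
Qed.

Lemma Bz_le m K : Bz R m K <= ((m%:R * expR 1 ^+ 2) / K%:R ^+ 2) ^+ K.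
Proof.
case: K => [|K]; first by rewrite /Bz bin0 /= divr1 expr0.
set k := K.+1.
have hC : (('C(m, k))%:R * (k`!)%:R <= (m%:R ^+ k : R)).
  by rewrite -natrM -natrX ler_nat bin_ffact ffact_le_exp.
have hF : (k%:R ^+ k / (k`!)%:R <= expR k%:R :> R).
  apply: le_trans (@expR_ge1Dxn R k%:R K (ler0n R k)); by rewrite lerDr.
have f0 : 0 < (k`!)%:R :> R by rewrite ltr0n fact_gt0.
have P0 : 0 < k%:R ^+ k :> R by rewrite exprn_gt0 // ltr0n.
have X0 : 0 < expR k%:R :> R by exact: expR_gt0.
set f := (k`!)%:R in hC hF f0; set P := k%:R ^+ k in hF P0.
set X := expR k%:R in hF X0.
have hu : f^-1 <= X / P.
  have -> : f^-1 = (P / f) / P by field; rewrite !gt_eqF.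
  by apply: ler_wpM2r => //; rewrite invr_ge0 ltW.
have hu0 : 0 <= f^-1 by rewrite invr_ge0 ltW.
have hC' : ('C(m, k))%:R <= m%:R ^+ k * f^-1 :> R.
  by rewrite ler_pdivlMr.
apply: le_trans (_ : m%:R ^+ k * (X / P) ^+ 2 <= _).
  rewrite /Bz -/f; apply: le_trans (_ : m%:R ^+ k * f^-1 * f^-1 <= _).
    by apply: ler_wpM2r.
  rewrite -mulrA -expr2; apply: ler_wpM2l; first by rewrite exprn_ge0 ?ler0n.
  by apply: lerXn2r => //; rewrite ?nnegrE // divr_ge0 // ltW.
rewrite /X /P -[k%:R]mulr1 expRM_natl mulr1.
rewrite le_eqVlt; apply/orP; left; apply/eqP.
rewrite !exprMn !exprVn -!exprM [(k * 2)%N]mulnC mulrA.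
by rewrite -(mulrA (m%:R ^+ k)) -exprD addnn -mul2n mulrA.
Qed.

Lemma bern_le (q : R) n : 0 <= q <= 1 -> (1 - q) ^+ n * (1 + n%:R * q) <= 1.
Proof.
case/andP => q0 q1; elim: n => [|n IH]; first by rewrite expr0 mul0r addr0 mul1r.
have h0 : 0 <= (1 - q) ^+ n by rewrite exprn_ge0 // subr_ge0.
rewrite exprS -natr1.
set a := (1 - q) ^+ n in IH h0 *.
have -> : (1 - q) * a * (1 + (n%:R + 1) * q) = a * (1 + n%:R * q) - a * (q * q * (n%:R + 1)).
  by ring.
apply: le_trans _ IH; rewrite lerBlDr lerDl.
by rewrite mulr_ge0 // mulr_ge0 ?mulr_ge0 // addr_ge0.
Qed.

End Real.

Lemma inv_le_eps (R : realType) (eps a : R) : 0 < eps -> 3 / eps <= a -> a^-1 <= eps / 3.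
Proof.
move=> e0 h; have a0 : 0 < a by apply: lt_le_trans h; rewrite divr_gt0.
by rewrite -invf_div lef_pV2 ?posrE ?divr_gt0.
Qed.

Unset Implicit Arguments.

Theorem mainTheorem14 (R : realType) :
  exists c : R, 0 < c /\
  forall col : forall n : nat, 'I_n -> bool,
  forall eps : R, 0 < eps ->
  exists N : nat, forall n : nat, (N <= n)%N ->
    let q : R := (Num.sqrt (n%:R))^-1 in
    1 - eps <= Pr_convtime_ge (@edgeG n) (col n) q (c / (q * ln (n%:R)) ^+ 2).
Proof.
set e1 := expR 1 : R.
have e10 : 0 < e1 by exact: expR_gt0.
exists (16 * e1 ^+ 2)^-1; split.
  by rewrite invr_gt0 mulr_gt0 // exprn_gt0.
move=> col eps eps0.
set B := 3 / eps + 4 * e1 + 3.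
have B0 : 0 < B by rewrite /B !addr_gt0 ?divr_gt0 ?mulr_gt0.
exists (Num.truncn (expR (3 / eps + 1)) + Num.truncn ((4 * B) ^+ 4) + 3)%N.
move=> n Hn /=.
case: n Hn => [|n'] Hn; first by lia.
have hn' : (0 < n')%N by lia.
set nR := (n'.+1)%:R : R.
have nR1 : expR (3 / eps + 1) <= nR.
  apply: ltW; apply: lt_le_trans (truncnS_gt _) _; rewrite ler_nat.
  apply: leq_trans _ Hn; rewrite -addnA -[X in (X < _)%N]addn0 ltn_add2l addnS //.
have nR2 : (4 * B) ^+ 4 <= nR.
  apply: ltW; apply: lt_le_trans (truncnS_gt _) _; rewrite ler_nat.
  apply: leq_trans _ Hn; rewrite [X in (X + 3)%N]addnC -addnA -[X in (X < _)%N]addn0 ltn_add2l addnS //.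
have nR0 : 0 < nR by rewrite ltr0n.
set s := Num.sqrt nR.
have s0 : 0 < s by rewrite sqrtr_gt0.
have ss : s ^+ 2 = nR by rewrite sqr_sqrtr // ltW.
set L := ln nR.
have L1 : 3 / eps + 1 <= L.
  by rewrite -(expRK (3 / eps + 1)) ler_ln ?posrE ?expR_gt0.
have L0 : 0 < L by apply: lt_le_trans L1; rewrite addr_gt0 ?divr_gt0.
set r := Num.sqrt s.
have r0 : 0 < r by rewrite sqrtr_gt0.
have rr : r ^+ 2 = s by rewrite sqr_sqrtr // ltW.
have r4 : nR = r ^+ 4 by rewrite -ss -rr -exprM.
have Lr : L <= 4 * r.
  rewrite /L r4 lnXn // -[ln r *+ 4]mulr_natl; apply: ler_wpM2l => //.
  exact/ltW/ln_sublinear.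
have rB : 4 * B <= r.
  have h := @ler_pXn2r R 4%N isT (4 * B) r.
  have hB : 4 * B \is Num.nneg by rewrite nnegrE ltW // mulr_gt0.
  have hr : r \is Num.nneg by rewrite nnegrE ltW.
  by rewrite -(h hB hr) -r4.
set y := s / L.
have yL : y * L = s by rewrite /y mulrVK // unitfE gt_eqF.
have y0 : 0 < y by rewrite divr_gt0.
have yB : B <= y.
  have h1 : r * r <= r * (4 * y).
    have : r * r = y * L by rewrite yL -rr expr2.
    move=> ->; rewrite (_ : r * (4 * y) = y * (4 * r)); last by ring.
    by apply: ler_wpM2l => //; exact: ltW.
  rewrite ler_pM2l // in h1; lra.
have [Ky Ky1] : (Num.truncn y)%:R <= y /\ y < (Num.truncn y).+1%:R.
  by have /andP [] := truncn_itv (ltW y0).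
set K := Num.truncn y in Ky Ky1 *.
have L1' : 1 <= L.
  have : 0 < 3 / eps by rewrite divr_gt0.
  lra.
have ys : y <= s.
  by rewrite -yL -[X in X <= _]mulr1; apply: ler_wpM2l => //; exact: ltW.
have sn : s <= n'%:R.
  have : s * s = n'%:R + 1 by rewrite -expr2 ss /nR -natr1.
  have : 1 <= n'%:R :> R by rewrite ler1n.
  have hs2 : 2 <= s.
    have : 0 < 3 / eps by rewrite divr_gt0.
    have : 0 < 4 * e1 by rewrite mulr_gt0.
    rewrite /B in yB; lra.
  have : 2 * s <= s * s by rewrite ler_pM2r.
  lra.
have hKn : (K <= n')%N.
  by rewrite -(ler_nat R); apply: le_trans Ky (le_trans ys sn).
have q01 : 0 <= s^-1 <= 1.
  apply/andP; split; first by rewrite invr_ge0 ltW.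
  rewrite -[X in _ <= X]invr1 lef_pV2 ?posrE //; nra.
set x := (16 * e1 ^+ 2)^-1 / (s^-1 * L) ^+ 2.
have xE : x = y ^+ 2 / (16 * e1 ^+ 2).
  rewrite /x /y; field; rewrite !gt_eqF //.
rewrite /Pr_convtime_ge /=.
apply: le_trans (gen_bound (R := R) (m := (Num.truncn x).+1) hn' hKn q01 _); last first.
  move=> mask P V hA hC /=; exact: (@E_holds R n' _ x (col n'.+1) mask P K V hA hC).
have T1 : K%:R / s <= eps / 3.
  apply: le_trans (_ : y / s <= _).
    by apply: ler_wpM2r => //; rewrite invr_ge0 ltW.
  have -> : y / s = L^-1 by rewrite /y; field; rewrite !gt_eqF.
  apply: inv_le_eps => //; apply: le_trans L1; by rewrite lerDl ?ler01.
have sB : 3 / eps <= s.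
  have : 0 < 4 * e1 by rewrite mulr_gt0.
  rewrite /B in yB; lra.
have T2 : (1 - s^-1) ^+ n'.+1 <= eps / 3.
  apply: le_trans (_ : (1 + s)^-1 <= _); last first.
    apply: le_trans (_ : s^-1 <= _); last exact: inv_le_eps.
    by rewrite lef_pV2 ?posrE ?addr_gt0 // lerDr.
  have hb := bern_le n'.+1 q01.
  have hs : n'.+1%:R / s = s by rewrite -/nR -ss expr2 mulfK ?gt_eqF.
  rewrite hs in hb.
  by rewrite -[(1 + s)^-1]mul1r ler_pdivlMr ?addr_gt0.
have Kpos : 3 / eps + 2 <= K%:R.
  have : 0 < 4 * e1 by rewrite mulr_gt0.
  rewrite -natr1 in Ky1; rewrite /B in yB; lra.
have K0 : (0 < K)%N by rewrite -(ltr_nat R); apply: lt_le_trans Kpos; rewrite addr_gt0 ?divr_gt0.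
have T3 : Bz R (Num.truncn x).+1 K <= eps / 3.
  apply: le_trans (Bz_le _ _ _) _.
  have x0 : 0 <= x.
    rewrite xE; apply: divr_ge0; first by apply: exprn_ge0; exact: ltW.
    by apply: mulr_ge0 => //; apply: exprn_ge0; exact: ltW.
  have mx : (Num.truncn x).+1%:R <= x + 1 by rewrite -natr1 lerD2r truncn_le.
  have x1 : 1 <= x.
    rewrite xE ler_pdivlMr ?mulr_gt0 ?exprn_gt0 // mul1r.
    have h : 4 * e1 <= y.
      have : 0 < 3 / eps by rewrite divr_gt0.
      rewrite /B in yB; lra.
    have h2 : (4 * e1) ^+ 2 <= y ^+ 2.
      by apply: lerXn2r => //; rewrite nnegrE ltW // mulr_gt0.
    have e16 : (4:R) ^+ 2 = 16 by rewrite expr2 -natrM.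
    by rewrite exprMn e16 in h2.
  set m := (Num.truncn x).+1 in mx *.
  have hme : m%:R * e1 ^+ 2 <= y ^+ 2 / 8.
    have : x * (16 * e1 ^+ 2) = y ^+ 2 by rewrite xE mulfVK // mulf_neq0 ?gt_eqF ?exprn_gt0.
    have : 0 <= e1 ^+ 2 by rewrite exprn_ge0 ?ltW.
    move=> ? ?; nra.
  have hyK : y ^+ 2 <= 4 * K%:R ^+ 2.
    have h2K : y <= 2 * K%:R.
      have : 1 <= K%:R :> R by rewrite ler1n.
      lra.
    have : y ^+ 2 <= (2 * K%:R) ^+ 2.
      apply: lerXn2r; rewrite ?nnegrE; [exact: ltW | by rewrite mulr_ge0 ?ler0n | exact: h2K].
    move=> h; apply: le_trans h _; rewrite le_eqVlt; apply/orP; left; apply/eqP; ring.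
  have Kr0 : 0 < K%:R ^+ 2 :> R by rewrite exprn_gt0 // ltr0n.
  apply: le_trans (_ : (2^-1) ^+ K <= _).
    apply: lerXn2r.
    - by rewrite nnegrE divr_ge0 ?(ltW Kr0) // mulr_ge0 ?ler0n // exprn_ge0 // ltW.
    - by rewrite nnegrE invr_ge0.
    - rewrite ler_pdivrMr // -/e1; lra.
  rewrite exprVn; apply: le_trans (_ : (K%:R)^-1 <= _); last first.
    by apply: inv_le_eps => //; apply: le_trans Kpos; rewrite lerDl ?ler01 ?ler0n.
  rewrite lef_pV2 ?posrE ?exprn_gt0 ?ltr0n //.
  by rewrite -natrX ler_nat ltnW // ltn_expl.
lra.
Qed.
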